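(* Let $x \in (0,1)$ have regular continued fraction expansion $x = [x_1,x_2,x_3,\ldots]$. Then for each $j \ge 1$, \[ R^{x_2+x_4+\cdots+x_{2j}}(x) = [x_{2j+1}+1, x_{2j+2}, x_{2j+3},\ldots], \] and if $0 < \ell < x_{2j}$, then \[ R^{x_2+x_4+\cdots+x_{2j-2}+\ell}(x) = [1, x_{2j}-\ell, x_{2j+1}, x_{2j+2},\ldots]. \]
   Context: $[a_1,a_2,a_3,\ldots]$ denotes the regular continued fraction $\cfrac{1}{a_1+\cfrac{1}{a_2+\cdots}}$ with positive integer digits. The Gauss map $G:[0,1]\to[0,1]$ is $G(0)=0$, $G(x)=\frac1x-\lfloor\frac1x\rfloor$ for $x\neq0$, and $R:[0,1]\to[0,1]$ is defined by $R(x) = 1-G(x)$. *)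

(* Defs.v *)
From Stdlib Require Import Reals Lra Lia.
Open Scope R_scope.

Fixpoint fcf (n : nat) (a : nat -> nat) : R :=
  match n with
  | O => 0
  | S m => 1 / (INR (a O) + fcf m (fun k => a (S k)))
  end.

Definition is_cf (a : nat -> nat) (x : R) : Prop :=
  (forall k, (1 <= a k)%nat) /\ Un_cv (fun n => fcf n a) x.

Definition gauss (x : R) : R :=
  if Req_EM_T x 0 then 0 else 1 / x - IZR (Int_part (1 / x)).

Definition Rmap (x : R) : R := 1 - gauss x.

(* Sum of digits x_2 + x_4 + ... + x_{2j}; with a k = x_{k+1} this is
   a 1 + a 3 + ... + a (2j-1). *)
Fixpoint even_digit_sum (a : nat -> nat) (j : nat) : nat :=
  match j with
  | O => O
  | S i => (even_digit_sum a i + a (2 * i + 1))%nat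
  end.

(* Main.v *)
From Coquelicot Require Import Coquelicot.
Require Import Defs.
From Stdlib Require Import Reals Lra Lia.
Open Scope R_scope.

Definition ccons (d : nat) (s : nat -> nat) : nat -> nat :=
  fun k => match k with O => d | S m => s m end.

Lemma fcf_ext n : forall a b, (forall k, a k = b k) -> fcf n a = fcf n b.
Proof.
  induction n as [|n IH]; intros a b H; simpl; auto.
  rewrite H, (IH _ (fun k => b (S k))); auto.
Qed.

Lemma is_cf_ext a b x : is_cf a x -> (forall k, a k = b k) -> is_cf b x.
Proof.
  intros [H1 H2] He; split.
  - intro k; rewrite <- He; auto.
  - intros e he; destruct (H2 e he) as [N HN]; exists N; intros n hn.
    rewrite <- (fcf_ext n a b He); auto.
Qed.

Lemma fcf_bound n : forall a, (forall k, (1 <= a k)%nat) -> 0 <= fcf n a <= 1.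
Proof.
  induction n as [|n IH]; intros a H; simpl; [lra|].
  assert (h1 := IH (fun k => a (S k)) (fun k => H (S k))).
  assert (h2 : 1 <= INR (a O)) by (apply (le_INR 1); auto).
  unfold Rdiv; rewrite Rmult_1_l; split.
  - left; apply Rinv_0_lt_compat; lra.
  - rewrite <- Rinv_1; apply Rinv_le_contravar; lra.
Qed.

Lemma fcf_lower n a : (forall k, (1 <= a k)%nat) ->
  1 / (INR (a O) + 1) <= fcf (S n) a.
Proof.
  intros H; simpl.
  assert (h1 := fcf_bound n (fun k => a (S k)) (fun k => H (S k))).
  assert (h2 : 1 <= INR (a O)) by (apply (le_INR 1); auto).
  unfold Rdiv; rewrite !Rmult_1_l.
  apply Rinv_le_contravar; lra.
Qed.

Lemma cf_lower a x : is_cf a x -> 1 / (INR (a O) + 1) <= x.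
Proof.
  intros [H1 H2].
  apply is_lim_seq_Reals in H2.
  apply is_lim_seq_incr_1 in H2.
  assert (H := is_lim_seq_le (fun _ => 1 / (INR (a O) + 1)) _ _ _
     (fun n => fcf_lower n a H1) (is_lim_seq_const _) H2).
  simpl in H; auto.
Qed.

Lemma INR_a0 a : (forall k, (1 <= a k)%nat) -> 1 <= INR (a O).
Proof. intros H; apply (le_INR 1); auto. Qed.

Lemma cf_pos a x : is_cf a x -> 0 < x.
Proof.
  intros H; assert (h := cf_lower a x H).
  assert (h2 := INR_a0 a (proj1 H)).
  assert (0 < 1 / (INR (a O) + 1)) by (apply Rdiv_lt_0_compat; lra). lra.
Qed.

Lemma cf_tail a x : is_cf a x -> is_cf (fun k => a (S k)) (1 / x - INR (a O)).
Proof.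
  intros Hc; assert (hx := cf_pos a x Hc).
  destruct Hc as [H1 H2]; split; [intro; auto|].
  apply is_lim_seq_Reals in H2; apply is_lim_seq_Reals.
  apply is_lim_seq_incr_1 in H2.
  assert (H3 := is_lim_seq_div' (fun _ => 1) _ 1 x (is_lim_seq_const 1) H2
                 ltac:(lra)).
  assert (H4 := is_lim_seq_minus' _ _ _ _ H3 (is_lim_seq_const (INR (a O)))).
  eapply is_lim_seq_ext; [|exact H4].
  intro n; simpl.
  assert (h1 := fcf_bound n (fun k => a (S k)) (fun k => H1 (S k))).
  assert (h2 := INR_a0 a H1).
  field; lra.
Qed.

Lemma cf_range a x : is_cf a x -> 0 < x < 1.
Proof.
  intros Hc; assert (hx := cf_pos a x Hc).
  assert (hy := cf_pos _ _ (cf_tail a x Hc)).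
  assert (h2 := INR_a0 a (proj1 Hc)).
  split; auto.
  assert (1 < 1 / x) by lra.
  unfold Rdiv in H; rewrite Rmult_1_l in H.
  rewrite <- (Rinv_inv x), <- Rinv_1. apply Rinv_lt_contravar; lra.
Qed.

Lemma cf_uncons d s y : (1 <= d)%nat -> is_cf s y -> is_cf (ccons d s) (1 / (INR d + y)).
Proof.
  intros hd Hc; assert (hy := cf_range s y Hc).
  assert (h2 : 1 <= INR d) by (apply (le_INR 1); auto).
  destruct Hc as [H1 H2]; split.
  - intros [|k]; simpl; auto.
  - apply is_lim_seq_Reals in H2; apply is_lim_seq_Reals.
    apply is_lim_seq_incr_1.
    assert (H4 := is_lim_seq_plus' _ _ _ _ (is_lim_seq_const (INR d)) H2).
    assert (H3 := is_lim_seq_div' (fun _ => 1) _ 1 _ (is_lim_seq_const 1) H4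
                 ltac:(lra)).
    eapply is_lim_seq_ext; [|exact H3].
    intro n; simpl. apply (f_equal (fun t => 1 / (INR d + t))).
    apply fcf_ext; auto.
Qed.

Lemma gauss_cf a x : is_cf a x -> is_cf (fun k => a (S k)) (gauss x).
Proof.
  intros Hc; assert (hx := cf_range a x Hc).
  assert (Ht := cf_tail a x Hc).
  assert (hy := cf_range _ _ Ht).
  unfold gauss; destruct (Req_EM_T x 0) as [e|_]; [lra|].
  assert (E : Int_part (1 / x) = Z.of_nat (a O)).
  { unfold Int_part.
    assert (U : (Z.of_nat (a O) + 1)%Z = up (1 / x)).
    { apply tech_up; rewrite plus_IZR, <- INR_IZR_INZ; lra. }
    rewrite <- U; lia. }
  rewrite E, <- INR_IZR_INZ; auto.
Qed.

Lemma Rstep1 c v : is_cf c v -> (2 <= c 1%nat)%nat ->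
  is_cf (ccons 1 (ccons (c 1%nat - 1) (fun p => c (S (S p))))) (Rmap v).
Proof.
  intros Hc h2.
  assert (Hg := gauss_cf c v Hc).
  set (g := gauss v) in *.
  assert (hg := cf_range _ _ Hg).
  assert (Hz := cf_tail _ _ Hg). simpl in Hz.
  set (z := 1 / g - INR (c 1%nat)) in *.
  assert (hz := cf_range _ _ Hz).
  assert (I := cf_uncons (c 1%nat - 1) _ _ ltac:(lia) Hz).
  assert (O := cf_uncons 1 _ _ ltac:(lia) I).
  eapply is_cf_ext; [|intro; reflexivity].
  replace (Rmap v) with (1 / (INR 1 + 1 / (INR (c 1%nat - 1) + z))); auto.
  unfold Rmap; fold g.
  assert (hc : 2 <= INR (c 1%nat)) by (apply (le_INR 2); auto).
  rewrite minus_INR by lia.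
  assert (Hg' : g = 1 / (INR (c 1%nat) + z)) by (unfold z; field; lra).
  rewrite Hg'. simpl. field; repeat split; try lra.
Qed.

Lemma Rstep2 c v : is_cf c v -> c 1%nat = 1%nat ->
  is_cf (ccons (c 2%nat + 1) (fun p => c (S (S (S p))))) (Rmap v).
Proof.
  intros Hc h1.
  assert (Hg := gauss_cf c v Hc).
  set (g := gauss v) in *.
  assert (hg := cf_range _ _ Hg).
  assert (Hz := cf_tail _ _ Hg). simpl in Hz.
  set (z := 1 / g - INR (c 1%nat)) in *.
  assert (hz := cf_range _ _ Hz).
  assert (Hw := cf_tail _ _ Hz). simpl in Hw.
  set (w := 1 / z - INR (c 2%nat)) in *.
  assert (hw := cf_range _ _ Hw).
  assert (O := cf_uncons (c 2%nat + 1) _ _ ltac:(lia) Hw).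
  replace (Rmap v) with (1 / (INR (c 2%nat + 1) + w)); auto.
  unfold Rmap; fold g.
  assert (hc : 1 <= INR (c 2%nat)) by (apply (le_INR 1); apply (proj1 Hc)).
  assert (Hg' : g = 1 / (1 + z)) by (unfold z; rewrite h1; simpl; field; lra).
  assert (Hz' : z = 1 / (INR (c 2%nat) + w)) by (unfold w; field; lra).
  rewrite Hg', Hz', plus_INR. simpl. field. lra.
Qed.

Lemma block_partial c v : is_cf c v -> forall l, (0 < l)%nat -> (l < c 1%nat)%nat ->
  is_cf (ccons 1 (ccons (c 1%nat - l) (fun p => c (S (S p))))) (Nat.iter l Rmap v).
Proof.
  intros Hc l; induction l as [|l IH]; intros h0 h1; [lia|].
  destruct (Nat.eq_dec l 0) as [->|nl].
  - simpl. apply Rstep1; auto; lia.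
  - simpl. assert (H := Rstep1 _ _ (IH ltac:(lia) ltac:(lia)) ltac:(simpl; lia)).
    eapply is_cf_ext; [exact H|].
    intros [|[|k]]; simpl; auto; lia.
Qed.

Lemma block_full c v : is_cf c v ->
  is_cf (ccons (c 2%nat + 1) (fun p => c (S (S (S p))))) (Nat.iter (c 1%nat) Rmap v).
Proof.
  intros Hc.
  assert (h := proj1 Hc 1%nat).
  destruct (c 1%nat) as [|m] eqn:E; [lia|].
  destruct (Nat.eq_dec m 0) as [->|nm].
  - simpl. apply Rstep2; auto.
  - simpl. assert (H := block_partial c v Hc m ltac:(lia) ltac:(lia)).
    assert (H2 := Rstep2 _ _ H ltac:(simpl; lia)).
    exact H2.
Qed.

Lemma main_Q (x : R) (a : nat -> nat) : is_cf a x -> forall i,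
  exists d0, is_cf (ccons d0 (fun m => a (2 * i + 1 + m)%nat)) (Nat.iter (even_digit_sum a i) Rmap x).
Proof.
  intros Hc i; induction i as [|i [d0 IH]].
  - exists (a O); simpl. eapply is_cf_ext; [exact Hc|].
    intros [|k]; simpl; auto.
  - exists (a (2 * i + 2)%nat + 1)%nat.
    assert (H := block_full _ _ IH).
    replace (even_digit_sum a (S i)) with (a (2 * i + 1)%nat + even_digit_sum a i)%nat by (simpl; lia).
    rewrite Nat.iter_add.
    replace (a (2 * i + 1)%nat) with (ccons d0 (fun m => a (2 * i + 1 + m)%nat) 1%nat) by (simpl; f_equal; lia).
    eapply is_cf_ext; [exact H|].
    intros [|k]; simpl; f_equal; f_equal; lia.
Qed.

(* Digits are indexed from 0: a k = x_{k+1}. *)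
Theorem lemma3p2 (x : R) (a : nat -> nat) :
  0 < x < 1 -> is_cf a x ->
  forall j : nat, (1 <= j)%nat ->
    is_cf (fun k => match k with
                    | O => (a (2 * j)%nat + 1)%nat
                    | S m => a (2 * j + 1 + m)%nat
                    end)
          (Nat.iter (even_digit_sum a j) Rmap x)
    /\
    (forall l : nat, (0 < l)%nat -> (l < a (2 * j - 1)%nat)%nat ->
      is_cf (fun k => match k with
                      | O => 1%nat
                      | S O => (a (2 * j - 1)%nat - l)%nat
                      | S (S m) => a (2 * j + m)%nat
                      end)
            (Nat.iter (even_digit_sum a (j - 1) + l) Rmap x)).
Proof.
  intros _ Hc j hj.
  destruct j as [|i]; [lia|].
  destruct (main_Q x a Hc i) as [d0 IH].
  replace (S i - 1)%nat with i by lia.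
  replace (2 * S i - 1)%nat with (2 * i + 1)%nat by lia.
  split.
  - assert (H := block_full _ _ IH).
    replace (even_digit_sum a (S i)) with (a (2 * i + 1)%nat + even_digit_sum a i)%nat by (simpl; lia).
    rewrite Nat.iter_add.
    replace (a (2 * i + 1)%nat) with (ccons d0 (fun m => a (2 * i + 1 + m)%nat) 1%nat) by (simpl; f_equal; lia).
    eapply is_cf_ext; [exact H|].
    intros [|k]; simpl; f_equal; f_equal; lia.
  - intros l h0 h1.
    assert (H := block_partial _ _ IH l h0 ltac:(cbn [ccons]; rewrite Nat.add_0_r; lia)).
    replace (even_digit_sum a i + l)%nat with (l + even_digit_sum a i)%nat by lia; rewrite Nat.iter_add.
    eapply is_cf_ext; [exact H|].
    intros [|[|k]]; cbn [ccons]; auto; try (f_equal; lia).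
    rewrite Nat.add_0_r; reflexivity.
Qed.
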